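(* Let $V$ be a set of propositional variables and let $\mu$ be a function assigning to every definable model set $\Sigma\subseteq\Pi V$ a subset $\mu(\Sigma)\subseteq\Sigma$; define $T\mathrel{|\!\sim}\psi$ iff $\mu(M(T))\subseteq M(\psi)$. Say that $\mathrel{|\!\sim}$ has interpolation iff for all definable $\Sigma,\Sigma'\subseteq\Pi V$ with $\mu(\Sigma)\subseteq\Sigma'$ there is a definable $\Sigma''$ with $\mu(\Sigma)\subseteq\Sigma''\subseteq\Sigma'$ and $R(\Sigma'')\subseteq R(\Sigma)\cap R(\Sigma')$. (a) If $V$ is finite, then $\mathrel{|\!\sim}$ has interpolation iff $I(\Sigma)\subseteq I(\mu(\Sigma))$ for all $\Sigma\subseteq\Pi V$. (b) If $V$ is infinite and $\mu(\Sigma)$ is definable whenever $\Sigma$ is definable, then $\mathrel{|\!\sim}$ has interpolation iff $I(\Sigma)\subseteq I(\mu(\Sigma))$ for all definable $\Sigma\subseteq\Pi V$.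
   Context: Classical propositional logic: $\Pi V$ is the set of all assignments $V\to\{\mathrm{TRUE},\mathrm{FALSE}\}$ (models), $M(T)$ the set of models of a theory $T$, and a set of models is definable if it equals $M(T)$ for some theory $T$ (in a finite language every set of models is definable). For $\Sigma\subseteq\Pi V$, a variable $p$ is irrelevant for $\Sigma$ if changing the value of $p$ in any element of $\Sigma$ yields again an element of $\Sigma$; $I(\Sigma)$ is the set of irrelevant variables and $R(\Sigma):=V-I(\Sigma)$ the set of relevant (essential) variables. *)

(* Defs.v *)
From Stdlib Require Import List.

Inductive form (V : Type) : Type :=
  | FVar : V -> form V
  | FTop : form V
  | FBot : form V
  | FNeg : form V -> form V
  | FAnd : form V -> form V -> form V
  | FOr  : form V -> form V -> form V
  | FImp : form V -> form V -> form V.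
Arguments FVar {V} _.
Arguments FTop {V}.
Arguments FBot {V}.
Arguments FNeg {V} _.
Arguments FAnd {V} _ _.
Arguments FOr {V} _ _.
Arguments FImp {V} _ _.

Definition model (V : Type) := V -> bool.

Definition mset (V : Type) := model V -> Prop.

Fixpoint sat {V : Type} (m : model V) (f : form V) : Prop :=
  match f with
  | FVar p => m p = true
  | FTop => True
  | FBot => False
  | FNeg g => ~ sat m g
  | FAnd g h => sat m g /\ sat m h
  | FOr g h => sat m g \/ sat m h
  | FImp g h => sat m g -> sat m h
  end.

Definition theory (V : Type) := form V -> Prop.
Definition Mod {V : Type} (T : theory V) : mset V :=
  fun m => forall f, T f -> sat m f.

Definition definable {V : Type} (S : mset V) : Prop :=
  exists T : theory V, S = Mod T.

Definition msubset {V : Type} (A B : mset V) : Prop := forall m, A m -> B m.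

Definition irrelevant {V : Type} (S : mset V) (p : V) : Prop :=
  forall m m' : model V, S m ->
    m' p = negb (m p) -> (forall q, q <> p -> m' q = m q) -> S m'.

Definition Irr {V : Type} (S : mset V) : V -> Prop := fun p => irrelevant S p.
Definition Rel {V : Type} (S : mset V) : V -> Prop := fun p => ~ irrelevant S p.

Definition vsubset {V : Type} (A B : V -> Prop) : Prop := forall p, A p -> B p.

Definition mu_ok {V : Type} (mu : mset V -> mset V) : Prop :=
  forall S, definable S -> msubset (mu S) S.

Definition nm_entails {V : Type} (mu : mset V -> mset V) (T : theory V) (psi : form V) : Prop :=
  msubset (mu (Mod T)) (fun m => sat m psi).

Definition has_interpolation {V : Type} (mu : mset V -> mset V) : Prop :=
  forall S S' : mset V, definable S -> definable S' -> msubset (mu S) S' ->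
    exists S'' : mset V, definable S'' /\ msubset (mu S) S'' /\ msubset S'' S' /\
      vsubset (Rel S'') (fun p => Rel S p /\ Rel S' p).

Definition finite_type (V : Type) : Prop := exists s : list V, forall v : V, In v s.

(* Main.v *)
Require Import Defs.
From Stdlib Require Import List Bool Classical ClassicalEpsilon FunctionalExtensionality PropExtensionality.

Fixpoint vars {V : Type} (f : form V) : list V :=
  match f with
  | FVar p => p :: nil
  | FTop => nil
  | FBot => nil
  | FNeg g => vars g
  | FAnd g h => vars g ++ vars h
  | FOr g h => vars g ++ vars h
  | FImp g h => vars g ++ vars h
  end.

Lemma sat_agree {V : Type} (f : form V) : forall m m',
  (forall v, In v (vars f) -> m v = m' v) -> (sat m f <-> sat m' f).
Proof.
  induction f; simpl; intros m m' H.
  - rewrite H by auto. tauto.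
  - tauto.
  - tauto.
  - rewrite (IHf m m' H). tauto.
  - rewrite (IHf1 m m'), (IHf2 m m'); [tauto| |]; intros; apply H; apply in_or_app; auto.
  - rewrite (IHf1 m m'), (IHf2 m m'); [tauto| |]; intros; apply H; apply in_or_app; auto.
  - rewrite (IHf1 m m'), (IHf2 m m'); [tauto| |]; intros; apply H; apply in_or_app; auto.
Qed.

Definition lits {V : Type} (m : model V) (l : list V) : form V :=
  fold_right (fun v acc => FAnd (if m v then FVar v else FNeg (FVar v)) acc) FTop l.

Lemma sat_lits {V : Type} (m m' : model V) l :
  sat m' (lits m l) <-> forall v, In v l -> m' v = m v.
Proof.
  induction l as [|a l IH]; simpl.
  - split; auto; intros _ v [].
  - rewrite IH. split.
    + intros [H1 H2] v [E0|Hv]; auto. subst v.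
      destruct (m a) eqn:E; simpl in H1; auto.
      destruct (m' a); auto. exfalso; auto.
    + intros H; split; auto.
      destruct (m a) eqn:E; simpl; rewrite H by auto; auto; rewrite E; discriminate.
Qed.

Lemma vars_lits {V : Type} (m : model V) l v : In v (vars (lits m l)) -> In v l.
Proof.
  induction l as [|a l IH]; simpl; auto.
  intros H; apply in_app_or in H; destruct H as [H|H]; auto.
  destruct (m a); simpl in H; destruct H as [H|[]]; auto.
Qed.

Lemma flips {V : Type} (S : mset V) (l : list V) : forall m m', S m ->
  (forall q, m' q <> m q -> In q l /\ irrelevant S q) -> S m'.
Proof.
  induction l as [|a l IH]; intros m m' Hm H.
  - assert (m' = m) as ->; auto.
    apply functional_extensionality; intros q.
    destruct (bool_dec (m' q) (m q)); auto. destruct (H q n) as [[] _].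
  - destruct (bool_dec (m' a) (m a)) as [E|E].
    + apply (IH m); auto. intros q Hq. destruct (H q Hq) as [[<-|Hl] Hi]; tauto.
    + set (m1 := fun q => if excluded_middle_informative (q = a) then m' a else m q).
      assert (S m1).
      { destruct (H a E) as [_ Hi]. apply (Hi m); auto.
        - unfold m1. destruct (excluded_middle_informative (a = a)); [|tauto].
          destruct (m' a), (m a); simpl; congruence.
        - intros q Hq; unfold m1; destruct (excluded_middle_informative (q = a)); tauto. }
      apply (IH m1); auto. intros q Hq.
      unfold m1 in Hq. destruct (excluded_middle_informative (q = a)) as [->|ne]; [tauto|].
      destruct (H q Hq) as [[<-|Hl] Hi]; tauto.
Qed.

Lemma interp_of {V : Type} (mu : mset V -> mset V) :
  (forall S, definable S -> vsubset (Irr S) (Irr (mu S))) -> has_interpolation mu.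
Proof.
  intros Hirr S S' dS dS' Hsub.
  set (K := fun p => Rel S p /\ Rel S' p).
  set (T'' := fun f : form V => (forall v, In v (vars f) -> K v) /\
                                (forall m0, mu S m0 -> sat m0 f)).
  exists (Mod T''). split; [exists T''; auto|]. split; [|split].
  - intros m0 Hm0 f [_ Hf]; auto.
  - intros m Hm. destruct dS' as [T' ->]. intros g Hg.
    apply NNPP; intros Hng.
    set (kl := filter (fun q => if excluded_middle_informative (K q) then true else false) (vars g)).
    assert (Hkl : forall q, In q kl <-> In q (vars g) /\ K q).
    { intros q; unfold kl; rewrite filter_In.
      destruct (excluded_middle_informative (K q)); intuition discriminate. }
    apply (Hm (FNeg (lits m kl))).
    + split.
      * intros v Hv; apply vars_lits in Hv; apply Hkl in Hv; tauto.
      * intros m0 Hm0 Hsat. rewrite sat_lits in Hsat. apply Hng.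
        set (m1 := fun q => if excluded_middle_informative (In q (vars g) /\ Rel (Mod T') q)
                            then m q else m0 q).
        assert (H1 : mu S m1).
        { apply (flips _ (vars g) m0); auto. intros q Hq. unfold m1 in Hq.
          destruct (excluded_middle_informative (In q (vars g) /\ Rel (Mod T') q)) as [[Hin HR]|]; [|tauto].
          split; auto. apply Hirr; auto. apply NNPP; intros HnS.
          apply Hq, eq_sym, Hsat, Hkl. split; auto. split; auto. }
        set (m2 := fun q => if excluded_middle_informative (In q (vars g)) then m q else m1 q).
        assert (H2 : Mod T' m2).
        { apply (flips _ (vars g) m1); auto. intros q Hq. unfold m2 in Hq.
          destruct (excluded_middle_informative (In q (vars g))) as [Hin|]; [|tauto].
          split; auto. apply NNPP; intros HR. apply Hq. unfold m1.
          destruct (excluded_middle_informative (In q (vars g) /\ Rel (Mod T') q)); tauto. }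
        apply (sat_agree g m2 m); auto.
        intros v Hv; unfold m2; destruct (excluded_middle_informative (In v (vars g))); tauto.
    + apply sat_lits; auto.
  - intros p Hp. apply NNPP; intros HK. apply Hp.
    intros m m' Hm Hp' Hother f Hf. apply (sat_agree f m m'); [|apply Hm; auto].
    intros v Hv. assert (v <> p) by (intros ->; apply HK, (proj1 Hf); auto).
    symmetry; auto.
Qed.

Lemma irr_of {V : Type} (mu : mset V -> mset V) (S : mset V) :
  has_interpolation mu -> definable S -> definable (mu S) -> mu_ok mu ->
  vsubset (Irr S) (Irr (mu S)).
Proof.
  intros HI dS dmS Hok p Hp.
  destruct (HI S (mu S) dS dmS (fun m h => h)) as [S'' [_ [H1 [H2 H3]]]].
  assert (Hi : irrelevant S'' p).
  { apply NNPP; intros Hn. destruct (H3 p Hn) as [HR _]. auto. }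
  intros m m' Hm E O. apply H2. apply (Hi m); auto.
Qed.

Lemma fin_def {V : Type} (s : list V) (Hs : forall v, In v s) (S : mset V) : definable S.
Proof.
  exists (fun f => exists m, ~ S m /\ f = FNeg (lits m s)).
  apply functional_extensionality; intros m'. apply propositional_extensionality.
  split.
  - intros Hm f [m [Hn ->]] Hsat. rewrite sat_lits in Hsat.
    assert (m' = m) as -> by (apply functional_extensionality; auto). auto.
  - intros Hm. apply NNPP; intros Hn.
    apply (Hm (FNeg (lits m' s))); [exists m'; auto|]. apply sat_lits; auto.
Qed.

Theorem fact4p2 :
  (forall (V : Type) (mu : mset V -> mset V),
      finite_type V -> mu_ok mu ->
      (has_interpolation mu <-> forall S : mset V, vsubset (Irr S) (Irr (mu S))))
  /\
  (forall (V : Type) (mu : mset V -> mset V),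
      ~ finite_type V -> mu_ok mu ->
      (forall S : mset V, definable S -> definable (mu S)) ->
      (has_interpolation mu <->
         forall S : mset V, definable S -> vsubset (Irr S) (Irr (mu S)))).
Proof.
  split.
  - intros V mu [s Hs] Hok. split.
    + intros HI S. apply irr_of; auto; apply (fin_def s Hs).
    + intros H. apply interp_of; auto.
  - intros V mu _ Hok Hd. split.
    + intros HI S dS. apply irr_of; auto.
    + apply interp_of.
Qed.
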